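(* Let $X$ be a locally super-compact $L$-topological space. Then in the $L$-ordered set $({\rm pt}_L\mathcal O(X),{\rm sub}_{\mathcal O(X)})$, for every $x\in X$ the $L$-subset ${\Downarrow}[x]$ is directed and $[x]=\sqcup{\Downarrow}[x]$.
   Context: $L$ is a frame with implication $\to$. $L$-subsets: maps to $L$; nonempty: $\bigvee A=1$; ${\rm sub}_X(A,B)=\bigwedge_xA(x)\to B(x)$. $L$-topology: $\mathcal O(X)\subseteq L^X$ closed under finite meets and arbitrary joins containing all constants $a_X$; interior $A^\circ=\bigvee\{B\in\mathcal O(X):B\le A\}$. Super-compact: nonempty $A\in L^X$ with ${\rm sub}_X(A,\bigvee_iV_i)=\bigvee_i{\rm sub}_X(A,V_i)$ for every family of open $V_i$; ${\rm SC}(X)$ their set. Locally super-compact: each open $A=\bigvee_{B\in{\rm SC}(X)}{\rm sub}_X(B,A)\wedge B^\circ$. A point of $\mathcal O(X)$: $p:\mathcal O(X)\to L$ with $p(A\wedge B)=p(A)\wedge p(B)$, $p(\bigvee_iA_i)=\bigvee_ip(A_i)$, $p(\lambda_X)=\lambda$. ${\rm pt}_L\mathcal O(X)$ is the set of points, $L$-ordered by ${\rm sub}_{\mathcal O(X)}(p,q)=\bigwedge_{A\in\mathcal O(X)}p(A)\to q(A)$. $[x](A)=A(x)$. For an $L$-ordered set $(P,e)$: ${\downarrow}y(x)=e(x,y)$; $\sqcup A=x$ iff $e(x,y)={\rm sub}_P(A,{\downarrow}y)$ for all $y$; directed: nonempty and $D(x)\wedge D(y)\le\bigvee_zD(z)\wedge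 e(x,z)\wedge e(y,z)$; ideal: directed lower set ($I(x)\wedge e(y,x)\le I(y)$); ${\Downarrow}x(y)=\bigwedge\{e(x,\sqcup I)\to I(y):I\text{ ideal with a supremum}\}$. *)

(* Defs.v *)
Set Implicit Arguments.
Unset Strict Implicit.

Record Frame := {
  fcar :> Type;
  fle : fcar -> fcar -> Prop;
  fmeet : fcar -> fcar -> fcar;
  fimp : fcar -> fcar -> fcar;
  ftop : fcar;
  fsup : (fcar -> Prop) -> fcar;
  finf : (fcar -> Prop) -> fcar;
  fle_refl : forall a, fle a a;
  fle_trans : forall a b c, fle a b -> fle b c -> fle a c;
  fle_antisym : forall a b, fle a b -> fle b a -> a = b;
  fmeet_l : forall a b, fle (fmeet a b) a;
  fmeet_r : forall a b, fle (fmeet a b) b;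
  fmeet_glb : forall a b c, fle c a -> fle c b -> fle c (fmeet a b);
  ftop_max : forall a, fle a ftop;
  fsup_ub : forall (S : fcar -> Prop) a, S a -> fle a (fsup S);
  fsup_lub : forall (S : fcar -> Prop) b, (forall a, S a -> fle a b) -> fle (fsup S) b;
  finf_lb : forall (S : fcar -> Prop) a, S a -> fle (finf S) a;
  finf_glb : forall (S : fcar -> Prop) b, (forall a, S a -> fle b a) -> fle b (finf S);
  fimp_adj : forall a b c, fle (fmeet a b) c <-> fle a (fimp b c)
}.

Arguments fle {f}.
Arguments fmeet {f}.
Arguments fimp {f}.
Arguments ftop {f}.
Arguments fsup {f}.
Arguments finf {f}.

Definition bjoin (L : Frame) (I : Type) (f : I -> L) : L :=
  fsup (fun a => exists i, a = f i).
Definition bmeet (L : Frame) (I : Type) (f : I -> L) : L :=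
  finf (fun a => exists i, a = f i).

Section LSets.
Variables (L : Frame) (X : Type).

Definition Lnonempty (A : X -> L) : Prop := bjoin A = ftop.

Definition subX (A B : X -> L) : L := bmeet (fun x => fimp (A x) (B x)).

Definition is_Ltopology (O : (X -> L) -> Prop) : Prop :=
  (forall a : L, O (fun _ => a)) /\
  (forall A B, O A -> O B -> O (fun x => fmeet (A x) (B x))) /\
  (forall (I : Type) (V : I -> X -> L), (forall i, O (V i)) ->
      O (fun x => bjoin (fun i => V i x))).

Variable O : (X -> L) -> Prop.

Definition interior (A : X -> L) : X -> L :=
  fun x => bjoin (fun B : {B : X -> L | O B /\ forall y, fle (B y) (A y)} =>
                    proj1_sig B x).

Definition super_compact (A : X -> L) : Prop :=
  Lnonempty A /\
  forall (I : Type) (V : I -> X -> L), (forall i, O (V i)) ->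
    subX A (fun x => bjoin (fun i => V i x)) = bjoin (fun i => subX A (V i)).

Definition locally_super_compact : Prop :=
  forall A, O A -> forall x,
    A x = bjoin (fun B : {B : X -> L | super_compact B} =>
                   fmeet (subX (proj1_sig B) A) (interior (proj1_sig B) x)).

Definition Opens := {A : X -> L | O A}.

Definition is_point (p : Opens -> L) : Prop :=
  (forall A B C : Opens,
     (forall x, proj1_sig C x = fmeet (proj1_sig A x) (proj1_sig B x)) ->
     p C = fmeet (p A) (p B)) /\
  (forall (I : Type) (V : I -> Opens) (W : Opens),
     (forall x, proj1_sig W x = bjoin (fun i => proj1_sig (V i) x)) ->
     p W = bjoin (fun i => p (V i))) /\
  (forall (l : L) (C : Opens), (forall x, proj1_sig C x = l) -> p C = l).

Definition pt := {p : Opens -> L | is_point p}.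

Definition ptE (p q : pt) : L :=
  bmeet (fun A : Opens => fimp (proj1_sig p A) (proj1_sig q A)).

Lemma ptx_is_point (x : X) : is_point (fun A : Opens => proj1_sig A x).
Proof.
  split; [|split].
  - intros A B C H; apply H.
  - intros I V W H; apply H.
  - intros l C H; apply H.
Qed.

Definition ptx (x : X) : pt := exist _ _ (ptx_is_point x).

End LSets.

Section LOrdered.
Variables (L : Frame) (P : Type) (e : P -> P -> L).

Definition down (y : P) : P -> L := fun x => e x y.

Definition subP (A B : P -> L) : L := bmeet (fun x => fimp (A x) (B x)).

Definition is_sup (A : P -> L) (s : P) : Prop :=
  forall y, e s y = subP A (down y).

Definition directed (D : P -> L) : Prop :=
  bjoin D = ftop /\
  forall x y, fle (fmeet (D x) (D y))
                  (bjoin (fun z => fmeet (D z) (fmeet (e x z) (e y z)))).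

Definition lower_set (I : P -> L) : Prop :=
  forall x y, fle (fmeet (I x) (e y x)) (I y).

Definition ideal (I : P -> L) : Prop := directed I /\ lower_set I.

Definition waybelow (x : P) : P -> L :=
  fun y => finf (fun a => exists (I : P -> L) (s : P),
                   ideal I /\ is_sup I s /\ a = fimp (e x s) (I y)).

End LOrdered.

(* Main.v *)
Require Import Defs.
From Stdlib Require Import FunctionalExtensionality.

Local Infix "⊑" := fle (at level 70).

Ltac proj := first [ apply fle_refl | eapply fle_trans; [apply fmeet_l|]; proj
                   | eapply fle_trans; [apply fmeet_r|]; proj ].
Ltac msolve := match goal with |- fle ?l ?r => tryif (has_evar r; idtac) then fail 1 "evar in msolve" else (tryif has_evar l then fail 1 "evar" else (repeat (apply fmeet_glb); proj)) end.

Lemma trans {L : Frame} (a b c : L) : a ⊑ b -> b ⊑ c -> a ⊑ c.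
Proof. apply fle_trans. Qed.

Lemma meet_mono {L : Frame} (a a' b b' : L) : a ⊑ a' -> b ⊑ b' -> fmeet a b ⊑ fmeet a' b'.
Proof. intros; apply fmeet_glb; eapply fle_trans; [apply fmeet_l| |apply fmeet_r|]; assumption. Qed.

Lemma mp {L : Frame} (a b : L) : fmeet (fimp a b) a ⊑ b.
Proof. apply fimp_adj, fle_refl. Qed.

Lemma mp' {L : Frame} (a b : L) : fmeet a (fimp a b) ⊑ b.
Proof. eapply fle_trans; [|apply (mp a)]. msolve. Qed.

Lemma imp_intro {L : Frame} (a b c : L) : fmeet c a ⊑ b -> c ⊑ fimp a b.
Proof. apply fimp_adj. Qed.

Lemma bjoin_ub {L : Frame} {I} (f : I -> L) i : f i ⊑ bjoin f.
Proof. apply fsup_ub; eauto. Qed.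

Lemma bjoin_lub {L : Frame} {I} (f : I -> L) b : (forall i, f i ⊑ b) -> bjoin f ⊑ b.
Proof. intros H; apply fsup_lub; intros a [i ->]; auto. Qed.

Lemma bmeet_lb {L : Frame} {I} (f : I -> L) i : bmeet f ⊑ f i.
Proof. apply finf_lb; eauto. Qed.

Lemma bmeet_glb {L : Frame} {I} (f : I -> L) b : (forall i, b ⊑ f i) -> b ⊑ bmeet f.
Proof. intros H; apply finf_glb; intros a [i ->]; auto. Qed.

Lemma bjoin_ub' {L : Frame} {I} (f : I -> L) i a : a ⊑ f i -> a ⊑ bjoin f.
Proof. intros; eapply fle_trans; [eassumption|apply bjoin_ub]. Qed.

Lemma distr_r {L : Frame} {I} (f : I -> L) a : fmeet (bjoin f) a ⊑ bjoin (fun i => fmeet (f i) a).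
Proof.
  apply fimp_adj, bjoin_lub; intro i; apply fimp_adj.
  apply (bjoin_ub (fun i => fmeet (f i) a)).
Qed.

Lemma distr_l {L : Frame} {I} (f : I -> L) a : fmeet a (bjoin f) ⊑ bjoin (fun i => fmeet a (f i)).
Proof.
  apply (fle_trans (b := fmeet (bjoin f) a)); [msolve|].
  eapply fle_trans; [apply (distr_r f a)|].
  apply bjoin_lub; intro i; apply (bjoin_ub' _ i); msolve.
Qed.

Lemma meet_join_l {L : Frame} {I} (f : I -> L) a c :
  (forall i, fmeet a (f i) ⊑ c) -> fmeet a (bjoin f) ⊑ c.
Proof. intros H; eapply fle_trans; [apply distr_l|]; apply bjoin_lub; auto. Qed.

Lemma meet_join_r {L : Frame} {I} (f : I -> L) a c :
  (forall i, fmeet (f i) a ⊑ c) -> fmeet (bjoin f) a ⊑ c.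
Proof. intros H; eapply fle_trans; [apply distr_r|]; apply bjoin_lub; auto. Qed.

Lemma top_eq {L : Frame} (a : L) : ftop ⊑ a -> a = ftop.
Proof. intros; apply fle_antisym; auto using ftop_max. Qed.

Lemma subX_mono {L : Frame} {X} (B A A' : X -> L) : (forall z, A z ⊑ A' z) -> subX B A ⊑ subX B A'.
Proof.
  intros H; unfold subX; apply bmeet_glb; intro z; apply imp_intro.
  eapply trans; [|apply H]. eapply trans; [|apply mp].
  apply meet_mono; [apply (bmeet_lb (fun x => fimp (B x) (A x)))|apply fle_refl].
Qed.

Lemma subX_app {L : Frame} {X} (B A : X -> L) z : fmeet (B z) (subX B A) ⊑ A z.
Proof.
  eapply trans; [|apply (mp (B z))]. apply fmeet_glb; [|apply fmeet_l].
  eapply trans; [apply fmeet_r|]. apply (bmeet_lb (fun x => fimp (B x) (A x))).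
Qed.

Lemma subX_trans {L : Frame} {X} (C B U : X -> L) : fmeet (subX C B) (subX B U) ⊑ subX C U.
Proof.
  unfold subX at 3; apply bmeet_glb; intro z; apply imp_intro.
  eapply trans; [|apply (subX_app B U z)]. apply fmeet_glb; [|msolve].
  eapply trans; [|apply (subX_app C B z)]. msolve.
Qed.


Lemma int_open {L : Frame} {X} {O : (X -> L) -> Prop} (HO : is_Ltopology O) B : O (interior O B).
Proof. destruct HO as [_ [_ Hj]]. unfold interior. apply (Hj _ (fun i => proj1_sig i)). intro i; exact (proj1 (proj2_sig i)). Qed.

Lemma int_le {L : Frame} {X} (O : (X -> L) -> Prop) B z : interior O B z ⊑ B z.
Proof. unfold interior. apply bjoin_lub. intro i; apply (proj2 (proj2_sig i)). Qed.

Definition intO {L : Frame} {X} {O : (X -> L) -> Prop} (HO : is_Ltopology O) B : Opens O :=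
  exist _ (interior O B) (int_open HO B).

Lemma pt_meet {L : Frame} {X} {O : (X -> L) -> Prop} (p : pt O) (A B C : Opens O) :
  (forall x, proj1_sig C x = fmeet (proj1_sig A x) (proj1_sig B x)) ->
  proj1_sig p C = fmeet (proj1_sig p A) (proj1_sig p B).
Proof. apply (proj1 (proj2_sig p)). Qed.

Lemma pt_join {L : Frame} {X} {O : (X -> L) -> Prop} (p : pt O) I (V : I -> Opens O) (W : Opens O) :
  (forall x, proj1_sig W x = bjoin (fun i => proj1_sig (V i) x)) ->
  proj1_sig p W = bjoin (fun i => proj1_sig p (V i)).
Proof. apply (proj1 (proj2 (proj2_sig p))). Qed.

Lemma pt_const {L : Frame} {X} {O : (X -> L) -> Prop} (p : pt O) (l : L) (C : Opens O) :
  (forall x, proj1_sig C x = l) -> proj1_sig p C = l.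
Proof. apply (proj2 (proj2 (proj2_sig p))). Qed.

Lemma pt_mono {L : Frame} {X} {O : (X -> L) -> Prop} (p : pt O) (A A' : Opens O) :
  (forall z, proj1_sig A z ⊑ proj1_sig A' z) -> proj1_sig p A ⊑ proj1_sig p A'.
Proof.
  intros H. rewrite (pt_meet p A A' A); [apply fmeet_r|].
  intro z; apply fle_antisym; [apply fmeet_glb; [apply fle_refl|apply H]|apply fmeet_l].
Qed.

Lemma pt_bound {L : Frame} {X} {O : (X -> L) -> Prop} (HO : is_Ltopology O) (p : pt O)
  (A U : Opens O) (c : L) :
  (forall z, fmeet (proj1_sig A z) c ⊑ proj1_sig U z) -> fmeet (proj1_sig p A) c ⊑ proj1_sig p U.
Proof.
  intros H. destruct HO as [Hc [Hm _]].
  pose (K := exist O (fun _ => c) (Hc c) : Opens O).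
  pose (C := exist O (fun z => fmeet (proj1_sig A z) c) (Hm _ _ (proj2_sig A) (Hc c)) : Opens O).
  rewrite <- (pt_const p c K) by reflexivity.
  rewrite <- (pt_meet p A K C) by reflexivity.
  apply pt_mono. exact H.
Qed.

Lemma pB_point {L : Frame} {X} (O : (X -> L) -> Prop) B (HB : super_compact O B) :
  is_point (fun A : Opens O => subX B (proj1_sig A)).
Proof.
  split; [|split].
  - intros A B' C H. apply fle_antisym.
    + apply fmeet_glb; apply subX_mono; intro z; rewrite H; [apply fmeet_l|apply fmeet_r].
    + unfold subX at 3. apply bmeet_glb; intro z; apply imp_intro. rewrite H.
      apply fmeet_glb; [eapply trans; [|apply (subX_app B _ z)]|eapply trans; [|apply (subX_app B _ z)]]; msolve.
  - intros I V W H.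
    assert (E : proj1_sig W = fun x => bjoin (fun i => proj1_sig (V i) x))
      by (apply functional_extensionality; exact H).
    rewrite E. destruct HB as [_ Hs]. apply (Hs I (fun i => proj1_sig (V i))).
    intro i; exact (proj2_sig (V i)).
  - intros l C H.
    assert (E : proj1_sig C = fun _ => l) by (apply functional_extensionality; exact H).
    rewrite E. destruct HB as [Hne _]. apply fle_antisym.
    + apply (trans _ (fmeet (subX B (fun _ => l)) (bjoin B))).
      * apply fmeet_glb; [apply fle_refl|]. unfold Lnonempty in Hne. rewrite Hne. apply ftop_max.
      * apply meet_join_l. intro i. eapply trans; [|apply (subX_app B (fun _ => l) i)]. msolve.
    + unfold subX. apply bmeet_glb; intro z; apply imp_intro; apply fmeet_l.
Qed.

Definition SC {L : Frame} {X} (O : (X -> L) -> Prop) := {B : X -> L | super_compact O B}.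

Definition pB {L : Frame} {X} {O : (X -> L) -> Prop} (B : SC O) : pt O :=
  exist _ _ (pB_point O _ (proj2_sig B)).

Lemma ptE_app {L : Frame} {X} {O : (X -> L) -> Prop} (p q : pt O) (U : Opens O) :
  fmeet (ptE p q) (proj1_sig p U) ⊑ proj1_sig q U.
Proof.
  eapply trans; [|apply (mp (proj1_sig p U))]. apply meet_mono; [|apply fle_refl].
  apply (bmeet_lb (fun A : Opens O => fimp (proj1_sig p A) (proj1_sig q A))).
Qed.

Lemma ptE_trans {L : Frame} {X} {O : (X -> L) -> Prop} (p q r : pt O) :
  fmeet (ptE p q) (ptE q r) ⊑ ptE p r.
Proof.
  unfold ptE at 3. apply bmeet_glb; intro U; apply imp_intro.
  eapply trans; [|apply (ptE_app q r U)]. apply fmeet_glb; [msolve|].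
  eapply trans; [|apply (ptE_app p q U)]. msolve.
Qed.

Lemma ptE_refl {L : Frame} {X} {O : (X -> L) -> Prop} (p : pt O) : ptE p p = ftop.
Proof. apply top_eq. unfold ptE. apply bmeet_glb; intro U; apply imp_intro; apply fmeet_r. Qed.

Lemma pB_le_int {L : Frame} {X} {O : (X -> L) -> Prop} (HO : is_Ltopology O) (B : SC O) (p : pt O) :
  proj1_sig p (intO HO (proj1_sig B)) ⊑ ptE (pB B) p.
Proof.
  unfold ptE. apply bmeet_glb; intro U; apply imp_intro. simpl.
  apply pt_bound; [exact HO|]. intro z. simpl.
  eapply trans; [|apply (subX_app (proj1_sig B) _ z)].
  apply meet_mono; [apply int_le|apply fle_refl].
Qed.

Lemma pB_pB {L : Frame} {X} {O : (X -> L) -> Prop} (B C : SC O) :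
  subX (proj1_sig C) (proj1_sig B) ⊑ ptE (pB B) (pB C).
Proof.
  unfold ptE. apply bmeet_glb; intro U; apply imp_intro. simpl. apply subX_trans.
Qed.

Lemma int_pB_x {L : Frame} {X} {O : (X -> L) -> Prop} (B : SC O) x :
  interior O (proj1_sig B) x ⊑ ptE (pB B) (ptx O x).
Proof.
  unfold ptE. apply bmeet_glb; intro U; apply imp_intro. simpl.
  eapply trans; [|apply (subX_app (proj1_sig B) _ x)].
  apply meet_mono; [apply int_le|apply fle_refl].
Qed.

Lemma q_point {L : Frame} {X} {O : (X -> L) -> Prop} (I : pt O -> L) (Hd : directed (@ptE L X O) I) :
  is_point (fun U : Opens O => bjoin (fun p : pt O => fmeet (I p) (proj1_sig p U))).
Proof.
  destruct Hd as [Htop Hdir].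
  split; [|split].
  - intros A B C H. apply fle_antisym.
    + apply fmeet_glb; apply bjoin_lub; intro p; apply (bjoin_ub' _ p);
        apply meet_mono; try apply fle_refl; apply pt_mono; intro z; rewrite H;
        [apply fmeet_l|apply fmeet_r].
    + apply meet_join_r; intro p. apply meet_join_l; intro p'.
      apply (trans _ (fmeet (bjoin (fun z => fmeet (I z) (fmeet (ptE p z) (ptE p' z))))
                            (fmeet (proj1_sig p A) (proj1_sig p' B)))).
      * apply fmeet_glb; [eapply trans; [|apply (Hdir p p')]|]; msolve.
      * apply meet_join_r; intro r. apply (bjoin_ub' _ r).
        apply fmeet_glb; [msolve|]. rewrite (pt_meet r A B C H).
        apply fmeet_glb.
        -- eapply trans; [|apply (ptE_app p r A)]. msolve.
        -- eapply trans; [|apply (ptE_app p' r B)]. msolve.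
  - intros J V W H. apply fle_antisym.
    + apply bjoin_lub; intro p. rewrite (pt_join p J V W H).
      apply meet_join_l; intro i. apply (bjoin_ub' _ i). apply (bjoin_ub' _ p). apply fle_refl.
    + apply bjoin_lub; intro i. apply bjoin_lub; intro p. apply (bjoin_ub' _ p).
      apply meet_mono; [apply fle_refl|]. rewrite (pt_join p J V W H).
      apply (bjoin_ub (fun i => proj1_sig p (V i))).
  - intros l C H. apply fle_antisym.
    + apply bjoin_lub; intro p. rewrite (pt_const p l C H). apply fmeet_r.
    + apply (trans _ (fmeet l (bjoin I))).
      * apply fmeet_glb; [apply fle_refl|]. rewrite Htop. apply ftop_max.
      * apply meet_join_l; intro p. apply (bjoin_ub' _ p). rewrite (pt_const p l C H). msolve.
Qed.

Definition Dx {L : Frame} {X} {O : (X -> L) -> Prop} (x : X) (r : pt O) : L :=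
  bjoin (fun B : SC O => fmeet (interior O (proj1_sig B) x) (ptE r (pB B))).


Lemma G1 {L : Frame} {X} {O : (X -> L) -> Prop} (Hlsc : locally_super_compact O) (x : X)
  (E : pt O -> L) :
  (forall B : SC O, interior O (proj1_sig B) x ⊑ E (pB B)) ->
  (forall r, E r ⊑ ptE r (ptx O x)) ->
  is_sup (@ptE L X O) E (ptx O x).
Proof.
  intros HB HE y. unfold subP, down. apply fle_antisym.
  - apply bmeet_glb; intro r; apply imp_intro.
    eapply trans; [|apply (ptE_trans r (ptx O x) y)].
    apply fmeet_glb; [eapply trans; [apply fmeet_r|apply HE]|apply fmeet_l].
  - unfold ptE at 2. apply bmeet_glb; intro U; apply imp_intro. simpl.
    rewrite (Hlsc (proj1_sig U) (proj2_sig U) x).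
    apply meet_join_l; intro C.
    eapply trans; [|apply (ptE_app (pB C) y U)]. simpl.
    apply fmeet_glb; [|msolve].
    eapply trans; [|apply (mp (E (pB C)))].
    apply fmeet_glb.
    + eapply trans; [apply fmeet_l|].
      apply (bmeet_lb (fun r => fimp (E r) (ptE r y)) (pB C)).
    + eapply trans; [|apply HB]. msolve.
Qed.

Lemma G2 {L : Frame} {X} {O : (X -> L) -> Prop} (HO : is_Ltopology O)
  (Hlsc : locally_super_compact O) (x : X) (E : pt O -> L) :
  (forall B : SC O, interior O (proj1_sig B) x ⊑ E (pB B)) ->
  (forall r, E r ⊑ Dx x r) ->
  directed (@ptE L X O) E.
Proof.
  intros HB HD. split.
  - apply top_eq.
    pose proof (Hlsc (fun _ => ftop) (proj1 HO ftop) x) as H.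
    apply (trans _ (bjoin (fun B : {B : X -> L | super_compact O B} => fmeet (subX (proj1_sig B) (fun _ => ftop))
                                           (interior O (proj1_sig B) x)))).
    + rewrite <- H. apply fle_refl.
    + apply bjoin_lub; intro B. apply (bjoin_ub' _ (pB B)).
      eapply trans; [apply fmeet_r|apply HB].
  - intros p q.
    apply (trans _ (fmeet (Dx x p) (Dx x q))); [apply meet_mono; apply HD|].
    unfold Dx. apply meet_join_r; intro B. apply meet_join_l; intro B'.
    destruct HO as [Hc [Hm Hj]].
    pose (A := fun z => fmeet (interior O (proj1_sig B) z) (interior O (proj1_sig B') z)).
    assert (HA : O A) by (apply Hm; apply int_open; repeat split; assumption).
    assert (Hx : fmeet (interior O (proj1_sig B) x) (interior O (proj1_sig B') x) ⊑
                 bjoin (fun C : {B : X -> L | super_compact O B} => fmeet (subX (proj1_sig C) A) (interior O (proj1_sig C) x))).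
    { rewrite <- (Hlsc A HA x). apply fle_refl. }
    apply (trans _ (fmeet (fmeet (interior O (proj1_sig B) x) (interior O (proj1_sig B') x))
                          (fmeet (ptE p (pB B)) (ptE q (pB B'))))); [msolve|].
    eapply trans; [apply meet_mono; [apply Hx|apply fle_refl]|].
    apply meet_join_r; intro C. apply (bjoin_ub' _ (pB C)).
    apply fmeet_glb; [|apply fmeet_glb].
    + eapply trans; [|apply HB]. msolve.
    + eapply trans; [|apply (ptE_trans p (pB B) (pB C))].
      apply fmeet_glb; [msolve|]. eapply trans; [|apply pB_pB].
      eapply trans; [apply fmeet_l|]. eapply trans; [apply fmeet_l|].
      apply subX_mono; intro z. eapply trans; [apply fmeet_l|apply int_le].
    + eapply trans; [|apply (ptE_trans q (pB B') (pB C))].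
      apply fmeet_glb; [msolve|]. eapply trans; [|apply pB_pB].
      eapply trans; [apply fmeet_l|]. eapply trans; [apply fmeet_l|].
      apply subX_mono; intro z. eapply trans; [apply fmeet_r|apply int_le].
Qed.

Lemma D_lower {L : Frame} {X} {O : (X -> L) -> Prop} (x : X) : lower_set (@ptE L X O) (Dx x).
Proof.
  intros r r'. unfold Dx. apply meet_join_r; intro B. apply (bjoin_ub' _ B).
  apply fmeet_glb; [msolve|]. eapply trans; [|apply (ptE_trans r' r (pB B))]. msolve.
Qed.

Lemma D_pB {L : Frame} {X} {O : (X -> L) -> Prop} (x : X) (B : SC O) :
  interior O (proj1_sig B) x ⊑ Dx x (pB B).
Proof.
  unfold Dx. apply (bjoin_ub' _ B). apply fmeet_glb; [apply fle_refl|].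
  rewrite ptE_refl. apply ftop_max.
Qed.

Lemma D_x {L : Frame} {X} {O : (X -> L) -> Prop} (x : X) (r : pt O) :
  Dx x r ⊑ ptE r (ptx O x).
Proof.
  unfold Dx. apply bjoin_lub; intro B.
  eapply trans; [|apply (ptE_trans r (pB B) (ptx O x))].
  apply fmeet_glb; [msolve|]. eapply trans; [apply fmeet_l|apply int_pB_x].
Qed.

Lemma D_ideal {L : Frame} {X} {O : (X -> L) -> Prop} (HO : is_Ltopology O)
  (Hlsc : locally_super_compact O) (x : X) :
  ideal (@ptE L X O) (Dx x) /\ is_sup (@ptE L X O) (Dx x) (ptx O x).
Proof.
  split; [split|].
  - apply (G2 HO Hlsc x); [apply D_pB|intro r; apply fle_refl].
  - apply D_lower.
  - apply (G1 Hlsc x); [apply D_pB|apply D_x].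
Qed.

Lemma W_D {L : Frame} {X} {O : (X -> L) -> Prop} (HO : is_Ltopology O)
  (Hlsc : locally_super_compact O) (x : X) (r : pt O) :
  waybelow (@ptE L X O) (ptx O x) r ⊑ Dx x r.
Proof.
  destruct (D_ideal HO Hlsc x) as [Hi Hs].
  unfold waybelow.
  eapply trans; [apply finf_lb; exists (Dx x), (ptx O x); split; [exact Hi|split; [exact Hs|reflexivity]]|].
  rewrite ptE_refl. eapply trans; [|apply (mp ftop)]. apply fmeet_glb; [apply fle_refl|apply ftop_max].
Qed.

Lemma W_pB {L : Frame} {X} {O : (X -> L) -> Prop} (HO : is_Ltopology O) (x : X) (B : SC O) :
  interior O (proj1_sig B) x ⊑ waybelow (@ptE L X O) (ptx O x) (pB B).
Proof.
  unfold waybelow. apply finf_glb. intros a [I [s [[HId Hlow] [Hsup ->]]]].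
  apply imp_intro.
  pose (q := exist _ _ (q_point I HId) : pt O).
  assert (Hsq : ptE s q = ftop).
  { rewrite (Hsup q). unfold subP, down. apply top_eq. apply bmeet_glb; intro p; apply imp_intro.
    eapply trans; [apply fmeet_r|]. unfold ptE. apply bmeet_glb; intro U; apply imp_intro.
    simpl. apply (bjoin_ub (fun p0 : pt O => fmeet (I p0) (proj1_sig p0 U)) p). }
  pose (U := intO HO (proj1_sig B)).
  apply (trans _ (proj1_sig s U)).
  { eapply trans; [|apply (ptE_app (ptx O x) s U)]. simpl. msolve. }
  apply (trans _ (proj1_sig q U)).
  { eapply trans; [|apply (ptE_app s q U)]. rewrite Hsq. apply fmeet_glb; [apply ftop_max|apply fle_refl]. }
  simpl. apply bjoin_lub; intro p.
  eapply trans; [|apply (Hlow p (pB B))].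
  apply meet_mono; [apply fle_refl|]. apply pB_le_int.
Qed.

Theorem proposition4p5 (L : Frame) (X : Type) (O : (X -> L) -> Prop)
  (HO : is_Ltopology O) (Hlsc : locally_super_compact O) (x : X) :
  directed (@ptE L X O) (waybelow (@ptE L X O) (ptx O x)) /\
  is_sup (@ptE L X O) (waybelow (@ptE L X O) (ptx O x)) (ptx O x).
Proof.
  split.
  - apply (G2 HO Hlsc x); [apply (W_pB HO)|apply W_D; assumption].
  - apply (G1 Hlsc x); [apply (W_pB HO)|].
    intro r. eapply trans; [apply W_D; assumption|apply D_x].
Qed.
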